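(* Let $\pi\in\mathfrak{B}_n$ and regard $\Omega'_B(\pi;x)$ as a polynomial in $x$. If $\pi(1)>0$ then $\Omega'_B(\pi;-x-1/2)=(-1)^n\,\Omega'_B(\pi;x-1/2)$. If $\pi(1)<0$ then $\Omega'_B(\pi;-x)=(-1)^n\,\Omega'_B(\pi;x)$.
   Context: $\mathfrak{B}_n$ is the group of signed permutations (bijections $\pi$ of $\{-n,\dots,n\}$ with $\pi(-i)=-\pi(i)$), written as words $(\pi(1),\dots,\pi(n))$, with $\pi(0)=0$. For an integer $k\ge0$ let $Z_k$ be the totally ordered set $0<\bar1<1<\bar2<2<\dots<\bar k<k$, with $0$ and unbarred $j$ ''plus-type'' and barred $\bar j$ ''minus-type''. $\Omega'_B(\pi;k)$ is the number of sequences $(a_1,\dots,a_n)\in Z_k^n$ such that, with $a_0=0$, $a_0\le a_1\le\dots\le a_n$ and for every $s\in\{0,\dots,n-1\}$: if $\pi(s)<\pi(s+1)$ then $a_s<a_{s+1}$ or ($a_s=a_{s+1}$ is plus-type); if $\pi(s)>\pi(s+1)$ then $a_s<a_{s+1}$ or ($a_s=a_{s+1}$ is minus-type). As a function of $k\ge0$ this agrees with a unique polynomial in $k$ with rational coefficients, denoted $\Omega'_B(\pi;x)$. *)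

(* Defs.v *)
From mathcomp Require Import all_boot all_order all_algebra.
Set Implicit Arguments. Unset Strict Implicit. Unset Printing Implicit Defensive.
Import Order.TTheory GRing.Theory Num.Theory.

(* A signed permutation pi in B_n is represented by its word
   (pi(1), ..., pi(n)) as a sequence of integers whose absolute values
   are a permutation of 1..n.  pi(0) = 0 by convention. *)
Definition is_signed_perm (n : nat) (w : seq int) : bool :=
  perm_eq [seq absz x | x <- w] (iota 1 n).

(* Z_k = {0 < 1bar < 1 < 2bar < 2 < ... < kbar < k} is encoded in 'I_(2k+1):
   0 |-> 0, jbar |-> 2j-1, j |-> 2j.  Order is the order of nat.
   Plus-type = even code, minus-type = odd code. *)
Definition Zk (k : nat) := 'I_(k.*2.+1).
Definition plus_type (c : nat) : bool := ~~ odd c.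
Definition minus_type (c : nat) : bool := odd c.

Definition omega_valid (n k : nat) (w : seq int) (a : n.-tuple (Zk k)) : bool :=
  let b := 0%N :: [seq val x | x <- a] in
  let p := 0%R :: w in
  [forall s : 'I_n,
     let x := nth 0%N b s in let y := nth 0%N b s.+1 in
     (x <= y)%N &&
     (if (nth 0%R p s < nth 0%R p s.+1)%R then (x < y)%N || ((x == y) && plus_type x)
      else if (nth 0%R p s > nth 0%R p s.+1)%R then (x < y)%N || ((x == y) && minus_type x)
      else true)].

Definition OmegaB' (n : nat) (w : seq int) (k : nat) : nat :=
  #|[pred a : n.-tuple (Zk k) | @omega_valid n k w a]|.

(* Main.v *)
Require Import Defs.
From mathcomp Require Import all_boot all_order all_algebra.
Import Order.TTheory GRing.Theory Num.Theory.

Fixpoint allseq (M n : nat) : seq (seq nat) :=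
  if n is n'.+1 then [seq rcons s x | s <- allseq M n', x <- iota 0 M] else [:: [::]].

Lemma mem_allseq M n s : (s \in allseq M n) = (size s == n) && all (fun x => x < M) s.
Proof.
elim: n s => [|n IH] s /=.
  by case: s.
case/lastP: s => [|s x].
  apply/negbTE/allpairsP => -[[s' x'] /= [_ _ H]].
  by move: (congr1 size H); rewrite size_rcons.
apply/idP/idP.
- case/allpairsP => [[s' x'] /= [Hs Hx /rcons_inj [-> ->]]].
  move: Hs; rewrite IH => /andP[/eqP <- Ha].
  by rewrite size_rcons eqxx all_rcons Ha /= andbT; rewrite mem_iota in Hx.
- rewrite size_rcons eqSS all_rcons => /andP[Hs /andP[Hx Ha]].
  apply/allpairsP; exists (s, x) => /=; split => //.
    by rewrite IH Hs Ha.
  by rewrite mem_iota.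
Qed.

Lemma uniq_allseq M n : uniq (allseq M n).
Proof.
elim: n => [|n IH] //=.
apply: allpairs_uniq => //; first exact: iota_uniq.
by move=> [s x] [s' x'] _ _ /= /rcons_inj [-> ->].
Qed.

Lemma card_tuple_sum (k n : nat) (P : pred (seq nat)) :
  #|[pred a : n.-tuple 'I_(k.*2.+1) | P (map val a)]| =
  \sum_(s <- allseq (k.*2.+1) n) P s.
Proof.
transitivity (\sum_(a : n.-tuple 'I_(k.*2.+1)) nat_of_bool (P (map val a))).
  rewrite -sum1_card big_mkcond /=; apply: eq_bigr => a _; rewrite inE.
  by case: (P _).
rewrite -(big_map (fun a : n.-tuple 'I_(k.*2.+1) => map val (val a)) xpredT (fun s => nat_of_bool (P s))).
rewrite /index_enum -enumT.
apply: perm_big.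
apply: uniq_perm.
- rewrite map_inj_uniq ?enum_uniq //.
  move=> a b /= H; apply: val_inj; apply: (inj_map val_inj); exact: H.
- exact: uniq_allseq.
move=> s; rewrite mem_allseq; apply/idP/idP.
  case/mapP=> a _ ->; rewrite size_map size_tuple eqxx /=.
  by apply/allP => x /mapP [y _ ->].
case/andP => /eqP Hs Ha; apply/mapP.
have Hs' : size (map (@inord k.*2) s) == n by rewrite size_map Hs.
exists (Tuple Hs'); first by rewrite mem_enum.
rewrite /= -map_comp -[LHS]map_id; apply/eq_in_map => x Hx /=.
by rewrite inordK //; move/allP: Ha => /(_ x Hx).
Qed.
Definition Rel : rel (int * nat) := fun u v =>
  (u.2 <= v.2)%N &&
  (if (u.1 < v.1)%R then (u.2 < v.2)%N || ((u.2 == v.2) && plus_type u.2)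
   else if (u.1 > v.1)%R then (u.2 < v.2)%N || ((u.2 == v.2) && minus_type u.2)
   else true).

Lemma omega_valid_path n k w (a : n.-tuple (Zk k)) : size w = n ->
  @omega_valid n k w a = path Rel (0%R, 0%N) (zip w (map val a)).
Proof.
move=> Hw.
have Hsz : size (zip w (map val a)) = n by rewrite size_zip size_map size_tuple Hw minnn.
have E1 : forall i, nth (0%R, 0%N) ((0%R, 0%N) :: zip w (map val a)) i =
   (nth 0%R (0%R :: w) i, nth 0%N (0%N :: map val a) i).
  by move=> i; rewrite -nth_zip //= Hw size_map size_tuple.
have E2 : forall i, nth (0%R, 0%N) (zip w (map val a)) i =
   (nth 0%R w i, nth 0%N (map val a) i).
  by move=> i; rewrite -nth_zip // Hw size_map size_tuple.
rewrite /omega_valid; apply/forallP/(pathP (0%R, 0%N)).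
  move=> H i; rewrite Hsz => Hi; have := H (Ordinal Hi).
  by rewrite E1 E2.
move=> H i; have := H i; rewrite Hsz ltn_ord => /(_ isT).
by rewrite E1 E2.
Qed.
Fixpoint g (r : seq int) (v : nat) : nat :=
  match r with
  | [::] => (v == 0)%N
  | p :: r' => \sum_(u < v.+1) g r' u * Rel (head 0%R r', nat_of_ord u) (p, v)
  end.

Lemma last_zip (x : int) (y : nat) s t : size s = size t ->
  last (x, y) (zip s t) = (last x s, last y t).
Proof. by elim: s x y t => [|a s IH] x y [|b t] //= [/IH]. Qed.

Lemma head_rev (w : seq int) : head 0%R (rev w) = last 0%R w.
Proof. by case/lastP: w => // w p; rewrite rev_rcons last_rcons. Qed.

Lemma sum_iota_pick (M v : nat) (b : nat -> bool) : (v < M)%N ->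
  \sum_(x <- iota 0 M) (b x && (x == v)) = b v.
Proof.
move=> Hv.
have -> : iota 0 M = index_iota 0 M by rewrite /index_iota subn0.
rewrite big_mkord (bigD1 (Ordinal Hv)) //= eqxx andbT big1 ?addn0 //.
move=> i /negbTE Hi; apply/eqP; rewrite eqb0 negb_and; apply/orP; right.
by apply: contraFN Hi => /eqP Hi; apply/eqP/val_inj.
Qed.

Lemma group_last (M : nat) (L : seq (seq nat)) (a : pred (seq nat)) (b : nat -> bool) :
  {in L, forall s, (last 0%N s < M)%N} ->
  \sum_(s <- L) (a s && b (last 0%N s)) =
  \sum_(u < M) (\sum_(s <- L) (a s && (last 0%N s == u))) * b u.
Proof.
move=> HL.
rewrite (eq_bigr (fun u : 'I_M => \sum_(s <- L) (a s && (last 0%N s == u)) * b u)); last first.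
  by move=> u _; rewrite big_distrl.
rewrite exchange_big /= big_seq [RHS]big_seq; apply: eq_bigr => s Hs.
have Hl := HL s Hs.
rewrite (bigD1 (Ordinal Hl)) //= eqxx andbT big1 ?addn0 //.
  by rewrite mulnb.
move=> i /negbTE Hi; apply/eqP; rewrite muln_eq0 eqb0 negb_and; apply/orP; left.
apply/orP; right; apply: contraFN Hi => /eqP Hi; apply/eqP/val_inj => /=; by rewrite Hi.
Qed.

Definition Fcnt (M : nat) (w : seq int) (v : nat) : nat :=
  \sum_(s <- allseq M (size w)) (path Rel (0%R, 0%N) (zip w s) && (last 0%N s == v)).

Lemma allseq_last M n s : (0 < M)%N -> s \in allseq M n -> (last 0%N s < M)%N.
Proof.
move=> HM; rewrite mem_allseq => /andP[_ /allP Ha].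
case/lastP: s Ha => // s x Ha; rewrite last_rcons; apply: Ha.
by rewrite mem_rcons mem_head.
Qed.

Lemma Fcnt_g M w v : (0 < M)%N -> (v < M)%N -> Fcnt M w v = g (rev w) v.
Proof.
move=> HM; elim/last_ind: w v => [|w p IH] v Hv.
  by rewrite /Fcnt /= big_seq1 /= eq_sym.
rewrite /Fcnt size_rcons /= big_allpairs_dep rev_rcons /= head_rev.
rewrite big_seq.
rewrite (eq_bigr (fun s => nat_of_bool (path Rel (0%R, 0%N) (zip w s) && Rel (last 0%R w, last 0%N s) (p, v)))); last first.
  move=> s; rewrite mem_allseq => /andP[/eqP Hs _].
  rewrite -(@sum_iota_pick M v (fun x => path Rel (0%R, 0%N) (zip w s) && Rel (last 0%R w, last 0%N s) (p, x)) Hv).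
  apply: eq_bigr => x _.
  by rewrite zip_rcons // rcons_path last_rcons last_zip // andbA.
rewrite -big_seq.
rewrite (@group_last M _ (fun s => path Rel (0%R, 0%N) (zip w s))
           (fun u => Rel (last 0%R w, u) (p, v))); last by move=> s; apply: allseq_last.
rewrite -(big_mkord (fun _ => true) (fun u => Fcnt M w u * Rel (last 0%R w, u) (p, v))) /=.
rewrite -(big_mkord (fun _ => true) (fun u => g (rev w) u * Rel (last 0%R w, u) (p, v))).
rewrite (big_cat_nat _ (n := v.+1)) //= [X in (_ + X)%N]big1_seq ?addn0; last first.
  move=> u /andP[_]; rewrite mem_index_iota => /andP[Hu _].
  by rewrite /Rel /= leqNgt Hu /= muln0.
rewrite big_nat_cond [RHS]big_nat_cond; apply: eq_bigr => u /andP[/andP[_ Hu] _].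
by rewrite IH // (leq_trans Hu Hv).
Qed.

Lemma Omega_g n w k : size w = n ->
  OmegaB' n w k = \sum_(u < k.*2.+1) g (rev w) u.
Proof.
move=> Hw; rewrite /OmegaB'.
transitivity (\sum_(s <- allseq (k.*2.+1) n) nat_of_bool (path Rel (0%R, 0%N) (zip w s))).
  rewrite -(card_tuple_sum k n (fun s => path Rel (0%R, 0%N) (zip w s))).
  by apply: eq_card => a; rewrite !inE omega_valid_path.
rewrite (eq_bigr (fun s => nat_of_bool (path Rel (0%R, 0%N) (zip w s) && (fun _ => true) (last 0%N s)))); last first.
  by move=> s _; rewrite andbT.
rewrite (@group_last k.*2.+1 _ (fun s => path Rel (0%R, 0%N) (zip w s)) (fun _ => true)); last by move=> s; apply: allseq_last.
apply: eq_bigr => u _; rewrite muln1 -(@Fcnt_g _ w u (ltn0Sn _) (ltn_ord u)) /Fcnt Hw.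
done.
Qed.
From mathcomp Require Import ring lra zify.
Local Open Scope ring_scope.

Definition S (f : int -> rat) (t : int) : rat :=
  match t with
  | Posz m => \sum_(i < m) f (Posz i)
  | Negz m => - \sum_(i < m.+1) f (Negz i)
  end.

Lemma S0 f : S f 0 = 0.
Proof. by rewrite /S /= big_ord0. Qed.

Lemma Negz0_add1 : Negz 0 + 1 = 0 :> int. Proof. by []. Qed.
Lemma NegzS_add1 m : Negz m.+1 + 1 = Negz m. Proof. by rewrite !NegzE; lia. Qed.
Lemma Posz_add1 m : Posz m + 1 = Posz m.+1. Proof. by rewrite -addn1 PoszD. Qed.

Lemma SD f t : S f (t + 1) - S f t = f t.
Proof.
case: t => [m|[|m]].
- by rewrite Posz_add1 /= big_ord_recr /= addrAC subrr add0r.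
- by rewrite Negz0_add1 S0 /= big_ord1 opprK add0r.
- by rewrite NegzS_add1 /= opprK [X in _ + X]big_ord_recr /= addKr.
Qed.

Lemma S_uniq f G : G 0 = 0 -> (forall t, G (t + 1) - G t = f t) -> forall t, G t = S f t.
Proof.
move=> G0 GD.
have HD : forall t, (G (t + 1) - S f (t + 1)) = G t - S f t.
  move=> t; apply/eqP; rewrite -subr_eq0; apply/eqP.
  rewrite -[RHS](subrr (f t)) -{1}(GD t) -(SD f t); ring.
suff H0 : forall t, G t - S f t = 0 by move=> t; apply/eqP; rewrite -subr_eq0 H0.
case=> m.
- elim: m => [|m IH]; first by rewrite G0 S0 subrr.
  by rewrite -Posz_add1 HD.
- elim: m => [|m IH].
    by rewrite -HD Negz0_add1 G0 S0 subrr.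
  by rewrite -HD NegzS_add1.
Qed.

Definition B (i : nat) (x : rat) : rat := (\prod_(j < i) (x - j%:R)) / i`!%:R.

Lemma B0 x : B 0 x = 1.
Proof. by rewrite /B big_ord0 fact0 divr1. Qed.

Lemma BS0 i : B i.+1 0 = 0.
Proof. by rewrite /B big_ord_recl /= subrr mul0r mul0r. Qed.

Lemma BD i x : B i.+1 (x + 1) - B i.+1 x = B i x.
Proof.
rewrite /B big_ord_recl big_ord_recr /=.
have -> : \prod_(j < i) (x + 1 - (bump 0 j)%:R) = \prod_(j < i) (x - j%:R).
  by apply: eq_bigr => j _; rewrite /bump /= add1n -addn1 natrD; ring.
set P := \prod_(j < i) (x - j%:R).
rewrite factS natrM.
have H1 : (i.+1%:R : rat) != 0 by rewrite pnatr_eq0.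
have H2 : (i`!%:R : rat) != 0 by rewrite pnatr_eq0 -lt0n fact_gt0.
rewrite -[i.+1]addn1 natrD in H1 *.
field.
by rewrite H1 H2.
Qed.

Definition ispoly (f : int -> rat) :=
  exists l : seq (rat * nat), forall t, f t = \sum_(p <- l) p.1 * B p.2 t%:~R.

Lemma ispoly_ext f g : (forall t, f t = g t) -> ispoly f -> ispoly g.
Proof. by move=> E [l Hl]; exists l => t; rewrite -E. Qed.

Lemma ispoly_const c : ispoly (fun _ => c).
Proof. by exists [:: (c, 0%N)] => t; rewrite big_seq1 B0 mulr1. Qed.

Lemma ispoly_add f g : ispoly f -> ispoly g -> ispoly (fun t => f t + g t).
Proof. by move=> [l Hl] [m Hm]; exists (l ++ m) => t; rewrite big_cat Hl Hm. Qed.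

Lemma ispoly_scale c f : ispoly f -> ispoly (fun t => c * f t).
Proof.
move=> [l Hl]; exists [seq (c * p.1, p.2) | p <- l] => t.
by rewrite big_map Hl mulr_sumr; apply: eq_bigr => p _ /=; rewrite mulrA.
Qed.

Lemma ispoly_S f : ispoly f -> ispoly (S f).
Proof.
move=> [l Hl]; exists [seq (p.1, p.2.+1) | p <- l] => t.
rewrite big_map /=; symmetry; apply: (@S_uniq f (fun s => \sum_(p <- l) p.1 * B p.2.+1 s%:~R)).
  by rewrite big1 // => p _; rewrite /= BS0 mulr0.
move=> s; rewrite Hl -sumrB; apply: eq_bigr => p _ /=.
by rewrite intrD /= -mulrBr BD.
Qed.

Definition bpoly (i : nat) : {poly rat} :=
  (i`!%:R)^-1 *: \prod_(j < i) ('X - (j%:R)%:P).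

Lemma bpolyE i x : (bpoly i).[x] = B i x.
Proof.
rewrite /bpoly hornerZ horner_prod /B mulrC; congr (_ * _).
by apply: eq_bigr => j _; rewrite hornerXsubC.
Qed.

Lemma ispoly_poly f : ispoly f -> exists P : {poly rat}, forall t, f t = P.[t%:~R].
Proof.
move=> [l Hl]; exists (\sum_(p <- l) p.1 *: bpoly p.2) => t.
rewrite Hl horner_sum; apply: eq_bigr => p _.
by rewrite hornerZ bpolyE.
Qed.

Fixpoint Phi (es : seq bool) (q : bool) (t : int) : rat :=
  match es with
  | [::] => 1
  | e :: es' => S (fun s => Phi es' false s + Phi es' true s) t
                + (if q then Phi es' false t else 0)
                + (if q == e then Phi es' q t else 0)
  end.

Lemma Phi_poly es q : ispoly (Phi es q).
Proof.
elim: es q => [|e es IH] q /=; first exact: ispoly_const.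
apply: ispoly_add; first apply: ispoly_add.
- by apply: ispoly_S; apply: ispoly_add.
- by case: q; [exact: IH | exact: ispoly_const].
- by case: (q == e); [exact: IH | exact: ispoly_const].
Qed.

Lemma S_odd f (sg : rat) : (forall t, f (- t - 1) = sg * f t) ->
  forall t, S f (- t) = - sg * S f t.
Proof.
move=> Hf t.
have H := @S_uniq (fun _ => 0) (fun t => S f (- t) + sg * S f t).
have -> : S f (- t) = (S f (- t) + sg * S f t) - sg * S f t by ring.
rewrite H.
- have -> : S (fun _ => 0) t = 0.
    rewrite -(@S_uniq (fun _ => 0) (fun _ => 0)) //.
  ring.
- by rewrite oppr0 S0 mulr0 addr0.
move=> s /=.
have E1 := SD f (- s - 1).
have E2 := SD f s.
rewrite Hf in E1.
have E3 : - s - 1 + 1 = - s by ring.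
rewrite E3 in E1.
have -> : - (s + 1) = - s - 1 by ring.
have -> : S f (- s - 1) = S f (- s) - sg * f s by rewrite -E1; ring.
have -> : S f (s + 1) = S f s + f s by rewrite -E2; ring.
ring.
Qed.

Lemma Phi_rec es q t : Phi es (~~ q) (- t - 1) = (-1) ^+ size es * Phi es q t.
Proof.
elim: es q t => [|e es IH] q t /=; first by rewrite expr0 mul1r.
rewrite exprS.
set sg := (-1) ^+ size es.
set psi := fun s => Phi es false s + Phi es true s.
have Hpsi : forall s, psi (- s - 1) = sg * psi s.
  move=> s; rewrite /psi -[false]/(~~ true) -[true]/(~~ false) !IH /=.
  by rewrite addrC mulrDr.
have HS := @S_odd psi sg Hpsi.
have E1 := SD psi (- t - 1).
have E3 : - t - 1 + 1 = - t by ring.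
rewrite E3 HS Hpsi in E1.
have -> : S psi (- t - 1) = - sg * S psi t - sg * psi t.
  by rewrite -E1; ring.
have F0 := IH true t.
have F1 := IH false t.
simpl in F0, F1.
rewrite /psi.
case: q; case: e => /=; rewrite ?F0 ?F1 -/sg; move: (S _ t) (Phi es false t) (Phi es true t) => a b c; ring.
Qed.

Definition Aasc (es : seq bool) (t : int) : rat :=
  S (fun s => Phi es false s + Phi es true s) t + Phi es false t.
Definition Adesc (es : seq bool) (t : int) : rat :=
  S (fun s => Phi es false s + Phi es true s) t.

Lemma Aasc_rec es t : Aasc es (- t - 1) = (-1) ^+ (size es).+1 * Aasc es t.
Proof.
rewrite /Aasc exprS.
set sg := (-1) ^+ size es.
set psi := fun s => Phi es false s + Phi es true s.
have Hpsi : forall s, psi (- s - 1) = sg * psi s.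
  move=> s; rewrite /psi -[false]/(~~ true) -[true]/(~~ false) !Phi_rec /=.
  by rewrite addrC mulrDr.
have HS := @S_odd psi sg Hpsi.
have E1 := SD psi (- t - 1).
have E3 : - t - 1 + 1 = - t by ring.
rewrite E3 HS Hpsi in E1.
have -> : S psi (- t - 1) = - sg * S psi t - sg * psi t.
  by rewrite -E1; ring.
have F0 := Phi_rec es true t.
simpl in F0.
rewrite F0 /psi -/sg; move: (S _ t) (Phi es false t) (Phi es true t) => a b c; ring.
Qed.

Lemma Adesc_rec es t : Adesc es (- t) = (-1) ^+ (size es).+1 * Adesc es t.
Proof.
rewrite /Adesc exprS.
set sg := (-1) ^+ size es.
set psi := fun s => Phi es false s + Phi es true s.
have Hpsi : forall s, psi (- s - 1) = sg * psi s.
  move=> s; rewrite /psi -[false]/(~~ true) -[true]/(~~ false) !Phi_rec /=.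
  by rewrite addrC mulrDr.
by rewrite (@S_odd psi sg Hpsi) mulN1r.
Qed.

Lemma g_step p q r v : q != p ->
  g (p :: q :: r) v = (\sum_(u < v) g (q :: r) u +
     (if (q < p)%R then ~~ odd v else odd v) * g (q :: r) v)%N.
Proof.
move=> Hqp; rewrite [LHS]/= big_ord_recr /=; congr (_ + _)%N.
  apply: eq_bigr => u _ /=; rewrite /Rel /= ltnW // (ltn_ord u) /=.
  by case: ifP => _; [|case: ifP => _]; rewrite muln1.
rewrite /Rel /= leqnn ltnn eqxx /= /plus_type /minus_type mulnC.
case: ifP => // Hlt; have := lt_total Hqp; rewrite Hlt /= => ->.
done.
Qed.

Fixpoint el (s0 : bool) (r : seq int) : seq bool :=
  match r with
  | p :: ((q :: _) as r') => (if (q < p)%R then s0 else ~~ s0) :: el s0 r'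
  | _ => [::]
  end.

Lemma sum_pairs (h : nat -> nat) (s0 : bool) (t : nat) : (s0 -> h 0%N = 0%N) ->
  (\sum_(u < t.*2 + s0) h u = \sum_(s < t) (h (s.*2 + s0) + h (s.*2 + s0 + 1)))%N.
Proof.
move=> H0; elim: t => [|t IH].
  rewrite big_ord0 /=; case: s0 H0 => [H0|_]; last by rewrite big_ord0.
  by rewrite big_ord1 H0.
rewrite [RHS]big_ord_recr /= -IH.
have -> : (t.+1.*2 + s0 = (t.*2 + s0).+1.+1)%N by rewrite doubleS; lia.
rewrite big_ord_recr /= big_ord_recr /= addnA.
by rewrite addn1.
Qed.

Lemma Phi_cons e es q t : Phi (e :: es) q t =
  S (fun s => Phi es false s + Phi es true s) t
  + (if q then Phi es false t else 0) + (if q == e then Phi es q t else 0).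
Proof. by []. Qed.

Lemma g_Phi p r : uniq (p :: r) -> 0%R \notin (p :: r) ->
  let s0 := (last 0%R (p :: r) < 0)%R in
  (forall (t : nat) (qb : bool), (g (p :: r) (t.*2 + s0 + qb))%:R = Phi (el s0 (p :: r)) qb (Posz t)) /\
  (s0 -> g (p :: r) 0 = 0%N).
Proof.
elim: r p => [|q r IH] p Hu H0 s0.
  have Hp : p != 0%R by apply: contraNneq H0 => ->; rewrite mem_head.
  have E : forall v, g [:: p] v = Rel (0%R, 0%N) (p, v).
    move=> v; rewrite /= big_ord_recl /= mul1n big1 ?addn0 //.
  split.
    move=> t qb; rewrite E /= /Rel /=.
    case: ifP => Hp0.
      by rewrite /plus_type /=; case: (t.*2 + s0 + qb)%N.
    have Hn : (p < 0)%R by move: (lt_total Hp); rewrite Hp0 orbF.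
    by rewrite Hn /s0 /= Hn addn1 addSn.
  move=> Hs; rewrite E /Rel /= /s0 /= in Hs *.
  by rewrite Hs ltNge le_eqVlt Hs orbT.
have Hu' : uniq (q :: r) by move: Hu => /= /andP[_].
have H0' : 0%R \notin q :: r by apply: contra H0 => H; rewrite inE H orbT.
have Hqp : q != p.
  by move: Hu => /= /andP[Hp _]; apply: contraNneq Hp => ->; rewrite mem_head.
have [IH1 IH2] := IH q Hu' H0'.
have Es0 : s0 = (last 0%R (q :: r) < 0)%R by [].
rewrite -Es0 in IH1 IH2.
split; last first.
  by move=> Hs; rewrite (@g_step p q r _ Hqp) big_ord0 (IH2 Hs) muln0.
move=> t qb.
rewrite (@g_step p q r _ Hqp).
set e := if (q < p)%R then s0 else ~~ s0.
have -> : el s0 [:: p, q & r] = e :: el s0 (q :: r) by [].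
rewrite Phi_cons.
have Hsum : (\sum_(u < t.*2 + s0 + qb) g (q :: r) u =
   \sum_(s < t) (g (q :: r) (s.*2 + s0) + g (q :: r) (s.*2 + s0 + 1)) +
   qb * g (q :: r) (t.*2 + s0))%N.
  rewrite -sum_pairs //; case: qb => /=; last by rewrite addn0 mul0n addn0.
  by rewrite addn1 big_ord_recr /= mul1n.
rewrite Hsum !natrD natr_sum.
have HS : S (fun s => Phi (el s0 (q :: r)) false s + Phi (el s0 (q :: r)) true s) (Posz t) =
   \sum_(s < t) ((g (q :: r) (s.*2 + s0))%:R + (g (q :: r) (s.*2 + s0 + 1))%:R).
  rewrite /S; apply: eq_bigr => s _.
  by rewrite -(IH1 s false) -(IH1 s true) addn0.
rewrite HS.
under eq_bigr do rewrite natrD.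
congr (_ + _ + _).
  clear Hsum; case: qb; first by rewrite /= mul1n -(IH1 t false) addn0.
  by rewrite /= mul0n.
rewrite natrM -(IH1 t qb) /e.
have Ho : odd (t.*2 + s0 + qb) = s0 (+) qb by rewrite !oddD odd_double !oddb.
rewrite Ho.
clear -Hqp; by case: (q < p)%R; case: s0; case: qb; rewrite /= ?mul1r ?mul0r.
Qed.

Lemma poly_zero_inj (R : {poly rat}) (f : nat -> rat) : injective f ->
  (forall k, R.[f k] = 0) -> R = 0.
Proof.
move=> Hf Hr; apply/eqP/negPn/negP => Hne.
suff : (size [seq f i | i <- iota 0 (size R)] < size R)%N by rewrite size_map size_iota ltnn.
apply: max_poly_roots => //.
  by apply/allP => x /mapP [i _ ->]; rewrite /root Hr.
by rewrite map_inj_uniq ?iota_uniq.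
Qed.

Lemma intr_nat (k : nat) : (Posz k)%:~R = k%:R :> rat.
Proof. by rewrite -pmulrn. Qed.

Lemma natr_inj_rat : injective (fun k : nat => k%:R : rat).
Proof. by move=> a b /eqP; rewrite eqr_nat => /eqP. Qed.

Lemma size_el s0 r : size (el s0 r) = (size r).-1.
Proof. by elim: r => [|p [|q r] IH] //=; rewrite IH. Qed.

Lemma last_rev_head (w : seq int) : last 0%R (rev w) = head 0%R w.
Proof. by case: w => // p w; rewrite rev_cons last_rcons. Qed.

Definition Afun (s0 : bool) (es : seq bool) : int -> rat :=
  if s0 then Adesc es else Aasc es.

Lemma Afun_poly s0 es : ispoly (Afun s0 es).
Proof.
have Hpsi : ispoly (S (fun s => Phi es false s + Phi es true s)).
  by apply: ispoly_S; apply: ispoly_add; apply: Phi_poly.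
by rewrite /Afun; case: s0 => //; apply: ispoly_add => //; apply: Phi_poly.
Qed.

Lemma Omega_A n w k : size w = n -> uniq w -> 0%R \notin w -> (0 < n)%N ->
  let s0 := (nth 0%R w 0 < 0)%R in
  (OmegaB' n w k)%:R = Afun s0 (el s0 (rev w)) (Posz k).
Proof.
move=> Hw Hu H0 Hn s0.
rewrite (@Omega_g n w k Hw).
have Hr : rev w != [::] by rewrite -size_eq0 size_rev Hw -lt0n.
case Er : (rev w) Hr => [|p r] // _.
have Hu' : uniq (p :: r) by rewrite -Er rev_uniq.
have H0' : 0%R \notin p :: r by rewrite -Er mem_rev.
have Es0 : s0 = (last 0%R (p :: r) < 0)%R.
  by rewrite -Er last_rev_head /s0; case: (w) => //.
have [G1 G2] := @g_Phi p r Hu' H0'.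
rewrite -Es0 in G1 G2.
have HS : S (fun s => Phi (el s0 (p :: r)) false s + Phi (el s0 (p :: r)) true s) (Posz k) =
   \sum_(s < k) ((g (p :: r) (s.*2 + s0))%:R + (g (p :: r) (s.*2 + s0 + 1))%:R).
  rewrite /S; apply: eq_bigr => s _.
  by rewrite -(G1 s false) -(G1 s true) addn0.
rewrite /Afun; case Hs0 : s0 in G1 G2 HS *; rewrite /Adesc /Aasc HS.
  have -> : k.*2.+1 = (k.*2 + true)%N by rewrite addn1.
  rewrite sum_pairs; last by move=> _; apply: G2.
  by rewrite natr_sum; apply: eq_bigr => s _; rewrite natrD.
have -> : k.*2.+1 = (k.*2 + false).+1%N by rewrite addn0.
rewrite big_ord_recr sum_pairs // natrD natr_sum /= -(G1 k false) !addn0.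
by congr (_ + _); apply: eq_bigr => s _; rewrite natrD.
Qed.

Theorem proposition4p13 (n : nat) (w : seq int) :
  size w = n -> is_signed_perm n w ->
  (exists P : {poly rat}, forall k : nat, P.[k%:R] = (OmegaB' n w k)%:R) /\
  (forall P : {poly rat}, (forall k : nat, P.[k%:R] = (OmegaB' n w k)%:R) ->
     (0 < nth 0 w 0 ->
        P \Po (- 'X - (2%:R)^-1%:P) = (-1) ^+ n *: (P \Po ('X - (2%:R)^-1%:P))) /\
     (nth 0 w 0 < 0 ->
        P \Po (- 'X) = (-1) ^+ n *: P)).
Proof.
move=> Hw Hp.
have Hu : uniq w.
  have : uniq (map absz w) by rewrite (perm_uniq Hp) iota_uniq.
  by move/map_uniq.
have H0 : 0 \notin w.
  apply/negP => Hin.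
  have : absz 0 \in map absz w by apply: map_f.
  by rewrite (perm_mem Hp) mem_iota.
case: n Hw Hp => [|n] Hw Hp.
  have Ew : w = [::] by apply/eqP; rewrite -size_eq0 Hw.
  subst w.
  have HO : forall k, OmegaB' 0 [::] k = 1%N.
    move=> k; rewrite (@Omega_g 0 [::] k) //= big_ord_recl /= big1 // => i _.
  split.
    by exists 1 => k; rewrite hornerC HO.
  by move=> P _; split; rewrite /= ltxx.
have Hn : (0 < n.+1)%N by [].
have HOA := fun k => @Omega_A n.+1 w k Hw Hu H0 Hn.
move: HOA; set s0 := (nth 0 w 0 < 0); set es := el s0 (rev w) => HOA.
have Hes : size es = n by rewrite /es size_el size_rev Hw.
have [Q HQ] := @ispoly_poly _ (Afun_poly s0 es).
have HOm : forall k : nat, (OmegaB' n.+1 w k)%:R = Q.[k%:R].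
  by move=> k; have := HOA k; rewrite /= -/es HQ intr_nat.
split.
  by exists Q => k; rewrite HOm.
move=> P HP.
have EPQ : P = Q.
  apply/eqP; rewrite -subr_eq0; apply/eqP.
  apply: (@poly_zero_inj _ _ natr_inj_rat) => k.
  by rewrite hornerD hornerN HP HOm subrr.
subst P.
split.
- move=> Hpos.
  have Hs0 : s0 = false by rewrite /s0 ltNge ltW.
  apply/eqP; rewrite -subr_eq0; apply/eqP.
  apply: (@poly_zero_inj _ (fun k : nat => k%:R + 2%:R^-1)).
    by move=> a b /addIr /natr_inj_rat.
  move=> k; rewrite hornerD hornerN hornerZ !horner_comp !hornerE.
  have -> : - (k%:R + 2%:R^-1) - 2%:R^-1 = ((- Posz k - 1)%:~R : rat).
    by rewrite intrB intrN intr_nat; field.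
  have -> : k%:R + 2%:R^-1 - 2%:R^-1 = ((Posz k)%:~R : rat).
    by rewrite intr_nat addrK.
  rewrite -!HQ Hs0 /Afun Aasc_rec Hes; ring.
- move=> Hneg.
  have Hs0 : s0 = true by [].
  apply/eqP; rewrite -subr_eq0; apply/eqP.
  apply: (@poly_zero_inj _ _ natr_inj_rat) => k.
  rewrite hornerD hornerN hornerZ !horner_comp !hornerE.
  have -> : - (k%:R) = ((- Posz k)%:~R : rat) by rewrite intrN intr_nat.
  rewrite -[k%:R]intr_nat -!HQ Hs0 /Afun Adesc_rec Hes; ring.
Qed.
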